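(* Let $D$ be an integral domain and let $S\subseteq R(D)$ be a union of prime ideals of $R(D)$. Set $L(S):=\{0\neq x\in D\mid \frac1x\notin S\}\cup\{0\}$. Then $L(S)$ is both a subring of $D$ and a regular factroid of $D$.
   Context: For an integral domain $D$ with fraction field $F$, the reciprocal complement $R(D)$ is the subring of $F$ generated by all $1/d$, $d\in D\setminus\{0\}$. A factroid of $D$ is an additive subgroup $H$ of $D$ such that whenever $f,g\in D\setminus\{0\}$ with $fg\in H$, then $f,g\in H$. For $S\subseteq D$, $[S]_D$ is the smallest factroid of $D$ containing $S$. A factroid $H$ is regular if $\{y\in D\mid gy\in[gH]_D\}=H$ for every nonzero $g\in D$. *)

(* Defs.v *)
From HB Require Import structures.
From mathcomp Require Import all_boot all_order all_algebra.
Set Implicit Arguments. Unset Strict Implicit. Unset Printing Implicit Defensive.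
Import Order.TTheory GRing.Theory Num.Theory.
Local Open Scope ring_scope.

Section Defs.
Variable D : idomainType.
Local Notation F := {fraction D}.
Local Notation "x %:F" := (@tofrac D x).

Inductive in_recip_compl : F -> Prop :=
  | rc_gen (d : D) : d != 0 -> in_recip_compl (d%:F)^-1
  | rc_one : in_recip_compl 1
  | rc_sub x y : in_recip_compl x -> in_recip_compl y -> in_recip_compl (x - y)
  | rc_mul x y : in_recip_compl x -> in_recip_compl y -> in_recip_compl (x * y).

Definition prime_ideal_RD (P : F -> Prop) : Prop :=
  (forall x, P x -> in_recip_compl x) /\
  P 0 /\
  (forall x y, P x -> P y -> P (x - y)) /\
  (forall r x, in_recip_compl r -> P x -> P (r * x)) /\
  ~ P 1 /\
  (forall x y, in_recip_compl x -> in_recip_compl y -> P (x * y) -> P x \/ P y).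

Definition union_of_primes_RD (S : F -> Prop) : Prop :=
  exists (I : Type) (P : I -> F -> Prop),
    (forall i, prime_ideal_RD (P i)) /\
    (forall x, S x <-> exists i, P i x).

Definition L_of (S : F -> Prop) (x : D) : Prop :=
  (x != 0 /\ ~ S (x%:F)^-1) \/ x = 0.

Definition is_subring (A : D -> Prop) : Prop :=
  [/\ A 1, (forall x y, A x -> A y -> A (x - y)) &
      (forall x y, A x -> A y -> A (x * y))].

Definition is_add_subgroup (H : D -> Prop) : Prop :=
  H 0 /\ (forall x y, H x -> H y -> H (x - y)).

Definition is_factroid (H : D -> Prop) : Prop :=
  is_add_subgroup H /\
  (forall f g : D, f != 0 -> g != 0 -> H (f * g) -> H f /\ H g).

Definition factroid_gen (S : D -> Prop) (y : D) : Prop :=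
  forall H, is_factroid H -> (forall s, S s -> H s) -> H y.

Definition is_regular_factroid (H : D -> Prop) : Prop :=
  is_factroid H /\
  (forall g : D, g != 0 ->
     forall y : D, factroid_gen (fun z => exists h, H h /\ z = g * h) (g * y) <-> H y).

End Defs.

(* Main.v *)
Require Import Defs.
From HB Require Import structures.
From mathcomp Require Import all_boot all_order all_algebra.
From mathcomp Require Import ring.
Set Implicit Arguments. Unset Strict Implicit. Unset Printing Implicit Defensive.
Import Order.TTheory GRing.Theory Num.Theory.
Local Open Scope ring_scope.

Lemma id1 (K : fieldType) (a b : K) : a != 0 -> b != 0 -> a - b != 0 -> (a-b)^-1 * (b^-1 - a^-1) = a^-1 * b^-1.
Proof. by move=> h1 h2 h3; field; rewrite ?h1 ?h2 ?h3. Qed.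
Lemma id2 (K : fieldType) (a b s x: K) : b != 0 -> x != 0 -> b^-1 * (s * (a * b * x^-1)) = s * (a * x^-1).
Proof. by move=> h1 h2; field; rewrite ?h1 ?h2. Qed.
Lemma id3 (K : fieldType) (g h x: K) : h != 0 -> x != 0 -> h^-1 * (g * h * x^-1) = g * x^-1.
Proof. by move=> h1 h2; field; rewrite ?h1 ?h2. Qed.
Lemma id4 (K : fieldType) (g y: K) : g != 0 -> y != 0 -> y^-1 = g * (g * y)^-1.
Proof. by move=> h1 h2; field; rewrite ?h1 ?h2. Qed.
Lemma id5 (K : comRingType) (s1 s2 a b x : K) : s2 * (s1 * (a * x)) - s1 * (s2 * (b * x)) = s1 * s2 * ((a - b) * x).
Proof. ring. Qed.

Section Aux.
Variable D : idomainType.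
Local Notation F := {fraction D}.
Local Notation "x %:F" := (@tofrac D x).
Local Notation R := (@in_recip_compl D).

Lemma R0 : R 0.
Proof. by rewrite -(subrr 1); apply: rc_sub; apply: rc_one. Qed.

Lemma RN x : R x -> R (- x).
Proof. by move=> h; rewrite -sub0r; apply: rc_sub => //; apply: R0. Qed.

Variable P : F -> Prop.
Hypothesis HP : prime_ideal_RD P.

Lemma PR x : P x -> R x. Proof. by case: HP => h _; apply: h. Qed.
Lemma P0 : P 0. Proof. by case: HP => _ [h _]. Qed.
Lemma PB x y : P x -> P y -> P (x - y). Proof. by case: HP => _ [_ [h _]]; apply: h. Qed.
Lemma PM r x : R r -> P x -> P (r * x). Proof. by case: HP => _ [_ [_ [h _]]]; apply: h. Qed.
Lemma PN1 : ~ P 1. Proof. by case: HP => _ [_ [_ [_ [h _]]]]. Qed.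
Lemma Pprime x y : R x -> R y -> P (x * y) -> P x \/ P y.
Proof. by case: HP => _ [_ [_ [_ [_ h]]]]; apply: h. Qed.
Lemma PN x : P x -> P (- x).
Proof. by move=> h; rewrite -sub0r; apply: PB => //; apply: P0. Qed.

Lemma Rinv (d : D) : d != 0 -> R (d%:F)^-1.
Proof. exact: rc_gen. Qed.

End Aux.

Theorem mainTheorem15 (D : idomainType) (S : {fraction D} -> Prop) :
  union_of_primes_RD S ->
  is_subring (L_of S) /\ is_regular_factroid (L_of S).
Proof.
case=> I [P [HP HS]].
have nz : forall x : D, x != 0 -> tofrac x != 0 by move=> x; rewrite tofrac_eq0.
have Lnz : forall x : D, x != 0 -> (forall i, ~ P i (tofrac x)^-1) -> L_of S x.
  move=> x x0 h; left; split=> //; by case/HS=> i /h.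
have Lget : forall x : D, L_of S x -> x != 0 -> forall i, ~ P i (tofrac x)^-1.
  move=> x [[_ h]|->] x0 i; last by rewrite eqxx in x0.
  by move=> Pi; apply: h; apply/HS; exists i.
have Lsub : forall x y, L_of S x -> L_of S y -> L_of S (x - y).
  move=> x y Lx Ly.
  have [->|xy0] := eqVneq (x - y) 0; first by right.
  apply: Lnz => // i Pi.
  have [x0|xn0] := eqVneq x 0.
    subst x; have y0 : y != 0 by move: xy0; rewrite sub0r oppr_eq0.
    apply: (Lget y Ly y0 i); move: Pi; rewrite sub0r rmorphN invrN => /(PN (HP i)).
    by rewrite opprK.
  have [y0|yn0] := eqVneq y 0.
    by subst y; apply: (Lget x Lx xn0 i); move: Pi; rewrite subr0.
  have : P i ((tofrac (x - y))^-1 * ((tofrac y)^-1 - (tofrac x)^-1)).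
    rewrite mulrC; apply: PM => //; apply: rc_sub; exact: rc_gen.
  have -> : (tofrac (x - y))^-1 * ((tofrac y)^-1 - (tofrac x)^-1)
            = (tofrac x)^-1 * (tofrac y)^-1.
    rewrite rmorphB /=; apply: id1; rewrite -?rmorphB; exact: nz.
  case/(Pprime (HP i)); try exact: rc_gen.
    exact: (Lget x Lx xn0 i).
  exact: (Lget y Ly yn0 i).
have Lmul : forall x y, L_of S x -> L_of S y -> L_of S (x * y).
  move=> x y Lx Ly.
  have [->|xy0] := eqVneq (x * y) 0; first by right.
  have xn0 : x != 0 by apply: contraNneq xy0 => ->; rewrite mul0r.
  have yn0 : y != 0 by apply: contraNneq xy0 => ->; rewrite mulr0.
  apply: Lnz => // i; rewrite rmorphM /= invfM.
  case/(Pprime (HP i)); try exact: rc_gen.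
    exact: (Lget x Lx xn0 i).
  exact: (Lget y Ly yn0 i).
have L0 : L_of S 0 by right.
have Ldiv : forall f g : D, f != 0 -> g != 0 -> L_of S (f * g) -> L_of S f.
  move=> f g f0 g0 Lfg; apply: Lnz => // i Pf.
  apply: (Lget _ Lfg (mulf_neq0 f0 g0) i).
  rewrite rmorphM /= invfM mulrC; apply: PM => //; exact: rc_gen.
have Lfac : is_factroid (L_of S).
  split; first by split.
  move=> f g f0 g0 Lfg; split; first exact: (Ldiv f g).
  by apply: (Ldiv g f) => //; rewrite mulrC.
split.
  split => //; apply: Lnz; first exact: oner_neq0.
  by move=> i; rewrite rmorph1 invr1; exact: PN1 (HP i).
split=> // g g0 y; split; last first.
  move=> Ly H _ Hsub; apply: Hsub; by exists y.
pose K (z : D) := forall i (x : D), x != 0 -> P i (tofrac g * (tofrac x)^-1) ->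
  exists s, in_recip_compl s /\ ~ P i s /\ P i (s * (tofrac z * (tofrac x)^-1)).
have K0 : K 0.
  move=> i x _ _; exists 1; split; first exact: rc_one.
  split; first exact: PN1 (HP i).
  by rewrite rmorph0 mul0r mulr0; exact: P0 (HP i).
have Kdiv : forall a b : D, b != 0 -> K (a * b) -> K a.
  move=> a b b0 Kab i x x0 Pg; have [s [Rs [nPs Ps]]] := Kab i x x0 Pg.
  exists s; split=> //; split=> //.
  have : P i ((tofrac b)^-1 * (s * (tofrac (a * b) * (tofrac x)^-1))).
    apply: PM => //; exact: rc_gen.
  by rewrite rmorphM /= id2 //; exact: nz.
have Kfac : is_factroid K.
  split.
    split=> // a b Ka Kb i x x0 Pg.
    have [s1 [R1 [nP1 P1]]] := Ka i x x0 Pg.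
    have [s2 [R2 [nP2 P2]]] := Kb i x x0 Pg.
    exists (s1 * s2); split; first exact: rc_mul.
    split; first by case/(Pprime (HP i)).
    have : P i (s2 * (s1 * (tofrac a * (tofrac x)^-1))
                - s1 * (s2 * (tofrac b * (tofrac x)^-1))).
      by apply: PB => //; apply: PM.
    by rewrite id5 rmorphB.
  move=> a b a0 b0 Kab; split; first exact: (Kdiv a b).
  by apply: (Kdiv b a) => //; rewrite mulrC.
move=> /(_ K Kfac) Kgy.
have /Kgy : forall s, (exists h, L_of S h /\ s = g * h) -> K s.
  move=> s [h [Lh ->]].
  have [->|h0] := eqVneq h 0; first by rewrite mulr0.
  move=> i x x0 Pg; exists (tofrac h)^-1; split; first exact: rc_gen.
  split; first exact: (Lget h Lh h0 i).
  by rewrite rmorphM /= id3 //; exact: nz.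
move=> Kg.
have [->|y0] := eqVneq y 0; first by right.
apply: Lnz => // i Py.
have gy0 : g * y != 0 by rewrite mulf_neq0.
have : P i (tofrac g * (tofrac (g * y))^-1).
  by rewrite rmorphM /= -id4 //; exact: nz.
case/(Kg i _ gy0) => s [_ [nPs Ps]]; apply: nPs.
by move: Ps; rewrite mulfV ?mulr1 // nz.
Qed.
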